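(* $(\mathfrak{ss}_e^{\varepsilon})^\perp=\aleph_0$ for every $\varepsilon>0$.
   Context: Let $\mathfrak S_{cc}$ be the set of all sequences $\mathbf a=\langle a_i:i\in\omega\rangle$ of rational numbers with $a_i\to0$ such that $\sum_i a_i$ is conditionally convergent (converges to a real number, with the positive terms summing to $+\infty$ and the negative terms to $-\infty$). Let $[\omega]^\omega_\omega$ be the set of infinite coinfinite subsets of $\omega$; for such $X$ with increasing enumeration $\langle i_n\rangle$, $\sum_X\mathbf a$ denotes $\sum_n a_{i_n}$. For $\varepsilon>0$, $(\mathfrak{ss}_e^{\varepsilon})^\perp$ is the least cardinality of a family $\mathcal A\subseteq\mathfrak S_{cc}$ such that there is no $X\in[\omega]^\omega_\omega$ for which, for every $\mathbf a\in\mathcal A$, $\sum_X\mathbf a$ converges to a limit in the open interval $(\sum\mathbf a-\varepsilon,\sum\mathbf a+\varepsilon)$. *)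

(* Defs.v *)
From HB Require Import structures.
From mathcomp Require Import all_boot all_order all_algebra.
From mathcomp Require Import all_classical all_reals all_analysis.
Set Implicit Arguments. Unset Strict Implicit. Unset Printing Implicit Defensive.
Import Order.TTheory GRing.Theory Num.Theory.
Import numFieldNormedType.Exports.
Local Open Scope classical_set_scope.
Local Open Scope ring_scope.

Section Defs.
Variable R : realType.

Definition rseq (a : nat -> rat) : R^nat := fun n => ratr (a n).

Definition Scc : set (nat -> rat) :=
  [set a | (rseq a n @[n --> \oo] --> (0 : R))
         /\ cvgn (series (rseq a))
         /\ (series (fun n => Num.max (rseq a n) 0) @ \oo --> +oo)
         /\ (series (fun n => Num.min (rseq a n) 0) @ \oo --> -oo)].

Definition inf_coinf (X : set nat) : Prop :=
  infinite_set X /\ infinite_set (~` X).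

Definition incr_enum (X : set nat) (e : nat -> nat) : Prop :=
  (forall n m, (n < m)%N -> (e n < e m)%N) /\ range e = X.

Definition sumX_to (X : set nat) (a : nat -> rat) (l : R) : Prop :=
  exists e, incr_enum X e /\ (series (fun n => rseq a (e n)) @ \oo --> l).

Definition good_for (eps : R) (A : set (nat -> rat)) (X : set nat) : Prop :=
  forall a, A a -> exists l, sumX_to X a l /\
     `| l - limn (series (rseq a)) | < eps.

End Defs.

(* Main.v *)
Require Import Defs.
From HB Require Import structures.
From mathcomp Require Import all_boot all_order all_algebra.
From mathcomp Require Import all_classical all_reals all_analysis.
From mathcomp Require Import ring lra.
Import Order.TTheory GRing.Theory Num.Theory.
Import numFieldNormedType.Exports.
Local Open Scope classical_set_scope.
Local Open Scope ring_scope.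
Set Implicit Arguments. Unset Strict Implicit. Unset Printing Implicit Defensive.
Definition smono (e : nat -> nat) := forall n m, (n < m)%N -> (e n < e m)%N.

Lemma smono_le e : smono e -> forall n m, (n <= m)%N -> (e n <= e m)%N.
Proof. by move=> he n m; rewrite leq_eqVlt => /orP[/eqP->//|/he/ltnW]. Qed.

Lemma smono_inj e : smono e -> injective e.
Proof. by move=> he n m enm; case: (ltngtP n m) => // /he; rewrite enm ltnn. Qed.

Lemma smono_ge e : smono e -> forall n, (n <= e n)%N.
Proof. by move=> he; elim => // n IH; apply: leq_ltn_trans IH (he _ _ (ltnSn n)). Qed.

Lemma enum_unique X e e' : incr_enum X e -> incr_enum X e' -> e = e'.
Proof.
move=> [he hX] [he' hX']; apply/funext => n; elim/ltn_ind: n => n IH.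
have : range e' (e n) by rewrite hX' -hX; exists n.
case=> m _ em.
have : range e (e' n) by rewrite hX -hX'; exists n.
case=> m' _ em'.
apply/eqP; rewrite eqn_leq; apply/andP; split.
- case: (ltnP m' n) => [mn|nm].
    have := IH m' mn; rewrite em' => E0; have E := smono_inj he' E0.
    by move: mn; rewrite E ltnn.
  by rewrite -em'; apply: smono_le.
- case: (ltnP m n) => [mn|nm].
    have := IH m mn; rewrite em => E0; have E := smono_inj he E0.
    by move: mn; rewrite E ltnn.
  by rewrite -em; apply: smono_le.
Qed.

Lemma sum_enum (V : zmodType) (X : set nat) e (F : nat -> V) : smono e -> range e = X ->
  forall n, \sum_(k < n) F (e k) = \sum_(0 <= i < e n | `[< X i >]) F i.
Proof.
move=> he hX; elim => [|n IH].
  rewrite big_ord0 big_nat_cond big1 // => i /andP[/andP[_ lt] /asboolP].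
  rewrite -hX => -[m _ em]; move: lt; rewrite -em ltnNge smono_le //.
rewrite big_ord_recr /= IH [RHS](@big_cat_nat _ _ _ (e n)) //=; last first.
  by rewrite ltnW // he.
congr (_ + _); rewrite big_ltn_cond; last exact: he.
have -> : `[< X (e n) >] by apply/asboolP; rewrite -hX; exists n.
rewrite big_nat_cond big1 ?addr0 // => i /andP[/andP[lt1 lt2] /asboolP].
rewrite -hX => -[m _ em]; move: lt1 lt2; rewrite -em => lt1 lt2.
have h1 : (n < m)%N.
  by rewrite ltnNge; apply/negP => /(smono_le he); rewrite leqNgt lt1.
have h2 : (m < n.+1)%N.
  by rewrite ltnNge; apply/negP => /(smono_le he); rewrite leqNgt lt2.
by move: h2; rewrite ltnS leqNgt h1.
Qed.

Lemma enum_exists (X : set nat) : (forall m, exists x, X x /\ (m <= x)%N) ->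
  exists e, incr_enum X e.
Proof.
move=> hX.
have hmin : forall m, exists x, [/\ X x, (m <= x)%N &
    forall y, X y -> (m <= y)%N -> (x <= y)%N].
  move=> m; have ex : exists x, `[< X x >] && (m <= x)%N.
    by case: (hX m) => x [Xx mx]; exists x; rewrite mx andbT; exact/asboolP.
  case: (ex_minnP ex) => x /andP[/asboolP Xx mx] minx.
  by exists x; split => // y Xy my; apply: minx; rewrite my andbT; exact/asboolP.
case: (choice hmin) => h hh.
pose e := fix e n := if n is n'.+1 then h (e n').+1 else h 0%N.
have step : forall n, (e n < e n.+1)%N by move=> n /=; case: (hh (e n).+1).
have sm : smono e.
  move=> n m; elim: m => // m IH; rewrite ltnS leq_eqVlt => /orP[/eqP->|/IH lt].
    exact: step.
  exact: ltn_trans lt (step m).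
exists e; split => //.
apply/seteqP; split.
  by move=> _ [n _ <-]; case: n => [|n] /=; [case: (hh 0%N) | case: (hh (e n).+1)].
move=> x Xx.
have ex : exists n, (x <= e n)%N by exists x; exact: smono_ge.
case: (ex_minnP ex) => n xn minn.
exists n => //; case: n xn minn => [|n] xn minn.
  case: (hh 0%N) => _ _ /(_ x Xx (leq0n _)) h0x.
  by apply/eqP; rewrite eqn_leq xn h0x.
have lt : (e n < x)%N.
  by rewrite ltnNge; apply/negP => /minn; rewrite ltnn.
case: (hh (e n).+1) => _ _ /(_ x Xx lt) hx.
by apply/eqP; rewrite eqn_leq xn hx.
Qed.

Lemma unbounded_infinite (X : set nat) :
  (forall m, exists x, X x /\ (m <= x)%N) -> infinite_set X.
Proof.
move=> hX /finite_seqP [s Xs].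
have [x [Xx]] := hX (\max_(i <- s) i).+1.
rewrite Xs /= in Xx.
have := @leq_bigmax_seq _ s xpredT (fun i => i) x Xx isT.
by move=> h1 h2; move: (leq_trans h2 h1); rewrite ltnn.
Qed.
Section Ana.
Variable R : realType.

Lemma series_shift_eq (u u' : R^nat) N : (forall k, (N <= k)%N -> u' k = u k) ->
  forall n, (N <= n)%N -> series u' n = series u n + \sum_(0 <= k < N) (u' k - u k).
Proof.
move=> h n Nn; rewrite !seriesEnat /=.
have -> : \sum_(0 <= k < n) u' k = \sum_(0 <= k < n) u k + \sum_(0 <= k < n) (u' k - u k).
  by rewrite -big_split /=; apply: eq_bigr => k _; rewrite addrC subrK.
congr (_ + _); rewrite [LHS](@big_cat_nat _ _ _ N) //=.
rewrite [X in _ + X = _]big_nat_cond [X in _ + X = _]big1 ?addr0 //.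
by move=> k /andP[/andP[Nk _] _]; rewrite h // subrr.
Qed.

Lemma cvg_pert (u u' : R^nat) N (l : R) : (forall k, (N <= k)%N -> u' k = u k) ->
  series u @ \oo --> l -> series u' @ \oo --> l + \sum_(0 <= k < N) (u' k - u k).
Proof.
move=> h hu.
have hD : (fun n => series u n + \sum_(0 <= k < N) (u' k - u k)) @ \oo -->
   l + \sum_(0 <= k < N) (u' k - u k).
  by apply: cvgD => //; exact: cvg_cst.
apply: cvg_trans hD; apply: near_eq_cvg; near=> n.
rewrite (series_shift_eq h) //; near: n; exact: nbhs_infty_ge.
Unshelve. all: by end_near. Qed.

Lemma cvgy_pert (u u' : R^nat) N : (forall k, (N <= k)%N -> u' k = u k) ->
  series u @ \oo --> +oo -> series u' @ \oo --> +oo.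
Proof.
move=> h /cvgryPge hu; apply/cvgryPge => A; near=> n.
rewrite (series_shift_eq h); last by near: n; exact: nbhs_infty_ge.
rewrite -lerBlDr; near: n; exact: hu.
Unshelve. all: by end_near. Qed.

Lemma cvgNy_pert (u u' : R^nat) N : (forall k, (N <= k)%N -> u' k = u k) ->
  series u @ \oo --> -oo -> series u' @ \oo --> -oo.
Proof.
move=> h /cvgrNyPle hu; apply/cvgrNyPle => A; near=> n.
rewrite (series_shift_eq h); last by near: n; exact: nbhs_infty_ge.
rewrite -lerBrDr; near: n; exact: hu.
Unshelve. all: by end_near. Qed.

Lemma Scc_pert (a a' : nat -> rat) N : (forall k, (N <= k)%N -> a' k = a k) ->
  Scc R a -> Scc R a' /\ limn (series (rseq R a')) =
     limn (series (rseq R a)) + \sum_(0 <= k < N) (rseq R a' k - rseq R a k).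
Proof.
move=> h [h0 [hc [hp hn]]].
have hr : forall k, (N <= k)%N -> rseq R a' k = rseq R a k.
  by move=> k Nk; rewrite /rseq h.
have hc' := cvg_pert hr hc.
split; last exact: cvg_lim hc'.
split; [|split; [|split]].
- apply: cvg_trans h0; apply: near_eq_cvg; near=> n.
  rewrite hr //; near: n; exact: nbhs_infty_ge.
- exact: cvgP hc'.
- by apply: (@cvgy_pert _ _ N) hp => k Nk; rewrite hr.
- by apply: (@cvgNy_pert _ _ N) hn => k Nk; rewrite hr.
Unshelve. all: by end_near. Qed.

End Ana.
Definition bseq (n : nat) : rat :=
  if odd n then - (n./2.+1%:R)^-1 else (n./2.+1%:R)^-1.

Section Base.
Variable R : realType.

Lemma rseq_b n : rseq R bseq n =
  if odd n then - harmonic (n./2) else harmonic (n./2).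
Proof.
rewrite /rseq /bseq /=; case: odd; by rewrite ?rmorphN fmorphV rmorph_nat.
Qed.

Lemma series_b n : series (rseq R bseq) n = if odd n then harmonic (n./2) else 0.
Proof.
elim: n => [|n IH]; first by rewrite seriesEnat /= big_geq.
rewrite seriesSr IH rseq_b /= uphalf_half.
by case: (odd n) => /=; rewrite ?add0n ?subrr ?add0r.
Qed.

Lemma half_cvg : (fun n => n./2) @ \oo --> \oo.
Proof.
apply/cvgnyPge => A; near=> n; rewrite -(doubleK A); apply: half_leq.
near: n; exact: nbhs_infty_ge.
Unshelve. all: by end_near. Qed.

Lemma harm_half_cvg : (fun n => harmonic (n./2) : R) @ \oo --> 0.
Proof. exact: cvg_comp _ _ half_cvg cvg_harmonic. Qed.


Lemma dvg2 (u : R^nat) : (forall n, 0 <= u n) ->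
  (forall j, u j.*2 + u j.*2.+1 = harmonic j) -> series u @ \oo --> +oo.
Proof.
move=> u0 uh.
have sh : forall m, series u m.*2 = series (@harmonic R) m.
  elim => [|m IH]; first by rewrite !seriesEnat /= !big_geq.
  by rewrite doubleS !seriesSr IH -addrA uh.
apply: nondecreasing_dvgn_lt.
  move=> m n mn; rewrite !seriesEnat /=.
  by apply: (@nondecreasing_series _ u xpredT 0%N) => // k _ _; exact: u0.
move=> hc; apply: (@dvg_harmonic R).
have dc : (fun n => n.*2) @ \oo --> \oo.
  apply/cvgnyPge => A; near=> n; rewrite -addnn (leq_trans _ (leq_addr _ _)) //.
  near: n; exact: nbhs_infty_ge.
have := cvg_comp _ _ dc hc.
have -> : series u \o (fun n => n.*2) = series (@harmonic R).
  by apply/funext => m /=; rewrite sh.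
by move=> H; apply: cvgP H.
Unshelve. all: by end_near. Qed.

Lemma Scc_b : Scc R bseq.
Proof.
split; [|split; [|split]].
- apply: (@squeeze_cvgr _ _ _ _ (fun n => - harmonic (n./2)) (fun n => harmonic (n./2))).
  + near=> n; rewrite rseq_b; case: odd.
      by rewrite lexx /= -subr_ge0 opprK addrC -mulr2n mulrn_wge0 // harmonic_ge0.
    by rewrite lexx andbT -subr_ge0 opprK -mulr2n mulrn_wge0 // harmonic_ge0.
  + rewrite -oppr0; apply: cvgN; exact: harm_half_cvg.
  + exact: harm_half_cvg.
- apply/cvg_ex; exists 0.
  apply: (@squeeze_cvgr _ _ _ _ (fun n => 0) (fun n => harmonic (n./2))).
  + near=> n; rewrite series_b; case: odd.
      by rewrite lexx andbT harmonic_ge0.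
    by rewrite lexx harmonic_ge0.
  + exact: cvg_cst.
  + exact: harm_half_cvg.
- apply: dvg2.
    by move=> n; rewrite le_max lexx orbT.
  move=> j; rewrite !rseq_b /= odd_double /= uphalf_double doubleK.
  by rewrite max_l ?harmonic_ge0 // max_r ?addr0 // oppr_le0 harmonic_ge0.
- apply/cvgNry; rewrite -seriesN; apply: dvg2.
    by move=> n /=; rewrite oppr_ge0 ge_min lexx orbT.
  move=> j.
  have E : forall n, (- (fun n => Num.min (rseq R bseq n) 0)) n = - Num.min (rseq R bseq n) 0 by [].
  rewrite !E !rseq_b /= odd_double /= uphalf_double doubleK.
  by rewrite min_r ?harmonic_ge0 // min_l ?oppr0 ?opprK ?add0r // oppr_le0 harmonic_ge0.
Unshelve. all: by end_near. Qed.

End Base.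
Definition fam (M i : nat) : nat -> rat :=
  fun k => bseq k + (if k == i then (i * M)%:R else 0).

Section Part2.
Variable R : realType.

Lemma fam_Scc M i : Scc R (fam M i) /\ limn (series (rseq R (fam M i))) =
   limn (series (rseq R bseq)) + (i * M)%:R.
Proof.
have h : forall k, (i.+1 <= k)%N -> fam M i k = bseq k.
  move=> k ik; rewrite /fam; case: eqP => [ki|]; last by rewrite addr0.
  by move: ik; rewrite ki ltnn.
have [hS hl] := Scc_pert h (Scc_b R).
split => //; rewrite hl; congr (_ + _).
rewrite big_nat_recr //= big_nat_cond big1 ?add0r.
  by rewrite /rseq /fam eqxx rmorphD /= addrC addKr rmorph_nat.
move=> k /andP[/andP[_ ki] _]; rewrite /rseq /fam.
by rewrite (ltn_eqF ki) addr0 subrr.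
Qed.

Lemma part2 (eps : R) : 0 < eps ->
  exists A : set (nat -> rat), A `<=` Scc R /\ (A #= [set: nat])%card /\
     ~ (exists X : set nat, inf_coinf X /\ good_for eps A X).
Proof.
move=> heps.
pose M := Num.Def.archi_bound (eps *+ 2).
have hM : eps *+ 2 < M%:R :> R by apply: archi_boundP; rewrite mulrn_wge0 // ltW.
have M0 : (0 < M)%N.
  rewrite lt0n; apply/negP => /eqP M0; move: hM; rewrite M0 mulr2n ltNge => /negP.
  by apply; rewrite addr_ge0 // ltW.
exists (range (fam M)); split; [|split].
- by move=> _ [i _ <-]; case: (fam_Scc M i).
- apply: inj_card_eq => i j _ _ hij.
  have hi := congr1 (fun f => f i) hij; have hj := congr1 (fun f => f j) hij.
  move: hi hj; rewrite /fam /= !eqxx [j == i]eq_sym.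
  case: eqP => // nij /addrI /esym /eqP hi /addrI /eqP hj.
  move: hi hj; rewrite ![0 == _]eq_sym !pnatr_eq0 !muln_eq0 (negbTE (lt0n_neq0 M0)) !orbF.
  by move=> /eqP -> /eqP ->.
- move=> [X [[Xinf Xco] good]].
  have : infinite_set (~` X `\` [set 0%N]).
    by apply: infinite_setD => //; exact: finite_set1.
  move=> /infinite_setN0 [i [nXi /= i0]].
  have [l0 [[e0 [he0 c0]] d0]] := good _ (ex_intro2 _ _ 0%N I erefl).
  have [li [[ei [hei ci]] di]] := good _ (ex_intro2 _ _ i I erefl).
  have E := enum_unique he0 hei; subst ei.
  have ee : (fun n => rseq R (fam M i) (e0 n)) = (fun n => rseq R (fam M 0) (e0 n)).
    apply/funext => n; rewrite /rseq /fam.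
    have Xe : X (e0 n) by case: he0 => _ <-; exists n.
    have -> : (e0 n == i) = false by apply/negbTE/eqP => en; apply: nXi; rewrite -en.
    by case: eqP.
  rewrite ee in ci.
  have l0i : l0 = li by rewrite -(cvg_lim _ c0) // -(cvg_lim _ ci).
  subst li.
  move: d0 di; rewrite (fam_Scc M 0).2 (fam_Scc M i).2 mul0n addr0.
  set S := limn _; move=> d0 di.
  have iM : M%:R <= (i * M)%:R :> R.
    by rewrite ler_nat leq_pmull // lt0n; apply/eqP.
  have : (i * M)%:R < eps *+ 2 :> R.
    have key : (i * M)%:R = (l0 - S) - (l0 - (S + (i * M)%:R)) :> R by ring.
    rewrite key; apply: le_lt_trans (ler_norm _) _.
    apply: le_lt_trans (ler_normB _ _) _.
    by rewrite mulr2n ltrD.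
  by move=> h; have := lt_trans h (lt_le_trans hM iM); rewrite ltxx.
Qed.

End Part2.
Fixpoint gfun (N : nat -> nat) (k : nat) : nat :=
  if k is k'.+1 then maxn (gfun N k').+2 (N k) else N 0%N.

Lemma gfun_step N k : ((gfun N k).+2 <= gfun N k.+1)%N.
Proof. by rewrite /= leq_maxl. Qed.

Lemma gfun_ge N k : (N k <= gfun N k)%N.
Proof. by case: k => [|k] //=; rewrite leq_maxr. Qed.

Lemma gfun_smono N : smono (gfun N).
Proof.
move=> n m; elim: m => // m IH; rewrite ltnS leq_eqVlt => /orP[/eqP->|/IH lt].
  exact: leq_trans (leqnSn _) (gfun_step N m).
exact: ltn_trans lt (leq_trans (leqnSn _) (gfun_step N m)).
Qed.

Section Part1.
Variable R : realType.

Lemma geo_sum (eps : R) m : \sum_(k < m) eps / 2 ^+ k.+2 = eps / 2 - eps / 2 ^+ m.+1.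
Proof.
elim: m => [|m IH]; first by rewrite big_ord0 expr1 subrr.
rewrite big_ord_recr /= IH.
have h2 : (2 : R) ^+ m.+1 != 0 by rewrite expf_neq0 // pnatr_eq0.
rewrite [2 ^+ m.+2]exprS; field.
exact: h2.
Qed.

Lemma part1 (eps : R) (A : set (nat -> rat)) : 0 < eps -> A `<=` Scc R -> finite_set A ->
  exists X : set nat, inf_coinf X /\ good_for eps A X.
Proof.
move=> heps AS /finite_seqP [s As].
pose d (k : nat) : R := eps / 2 ^+ k.+2.
have d0 : forall k, 0 < d k by move=> k; rewrite divr_gt0 // exprn_gt0.
have hN : forall k, exists N, forall i, (N <= i)%N -> forall a, A a ->
    `|rseq R a i| <= d k.
  move=> k; rewrite As.
  have : forall a, a \in s -> Scc R a by move=> a ha; apply: AS; rewrite As.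
  elim: s {As} => [|a s IH] hs.
    by exists 0%N => i _ a /=; rewrite in_nil.
  have [N2 HN2] : exists N, forall i, (N <= i)%N -> forall a, [set` s] a -> `|rseq R a i| <= d k.
    by apply: IH => b hb; apply: hs; rewrite in_cons hb orbT.
  have [h0 _] := hs a (mem_head _ _).
  have := cvgr_dist_le _ _ h0 _ (d0 k); case=> N1 _ HN1.
  exists (maxn N1 N2) => i hi b /=; rewrite in_cons => /orP[/eqP ->|hb].
    have := HN1 i (leq_trans (leq_maxl _ _) hi); by rewrite sub0r normrN.
  by apply: HN2 => //; exact: leq_trans (leq_maxr _ _) hi.
case: (choice hN) => N HN.
pose g := gfun N.
have gsm : smono g := gfun_smono N.
pose Y := range g.
pose X := ~` Y.
have XY : forall i, X i <-> ~ Y i by [].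
have Xunb : forall m, exists x, X x /\ (m <= x)%N.
  move=> m; exists (g m).+1; split; last exact: leq_trans (smono_ge gsm m) (leqnSn _).
  move=> [j _ gj].
  have mj : (m < j)%N.
    by rewrite ltnNge; apply/negP => /(smono_le gsm); rewrite gj ltnn.
  have := smono_le gsm mj; rewrite gj => h.
  by have := leq_trans (gfun_step N m) h; rewrite ltnn.
have Yunb : forall m, exists x, Y x /\ (m <= x)%N.
  by move=> m; exists (g m); split; [exists m | exact: smono_ge].
have [e he] := enum_exists Xunb.
exists X; split.
  split; first exact: unbounded_infinite.
  by rewrite /X setCK; exact: unbounded_infinite.
move=> a Aa.
pose u := rseq R a.
pose v := fun i => if `[< X i >] then 0 else u i.
have [_ [hc _]] := AS a Aa.
have vb : forall m, \sum_(0 <= i < m) `|v i| <= eps / 2.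
  move=> m.
  apply: (@le_trans _ _ (\sum_(0 <= i < g m) `|v i|)).
    apply: (@nondecreasing_series _ (fun i => `|v i|) xpredT 0%N) => //.
    exact: smono_ge.
  have -> : \sum_(0 <= i < g m) `|v i| = \sum_(0 <= i < g m | `[< Y i >]) `|u i|.
    rewrite [RHS]big_mkcond /=; apply: eq_bigr => i _; rewrite /v.
    case: (asboolP (X i)) => Xi; case: (asboolP (Y i)) => Yi //;
      first [by rewrite normr0 | by exfalso; exact: Xi Yi].
  rewrite -(sum_enum _ gsm erefl).
  apply: (@le_trans _ _ (\sum_(k < m) d k)).
    by apply: ler_sum => k _; apply: HN => //; exact: gfun_ge.
  by rewrite geo_sum gerBl divr_ge0 // ?exprn_ge0 // ltW.
have hnc : cvgn [normed series v].
  apply: nondecreasing_is_cvgn.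
    move=> m n mn; rewrite /=.
    by apply: (@nondecreasing_series _ (fun i => `|v i|) xpredT 0%N) => // ? _ _.
  by exists (eps / 2) => _ [n _ <-] /=; exact: vb.
have hvc := normed_cvg hnc.
have tb : `|limn (series v)| <= eps / 2.
  apply: le_trans (lim_series_norm hnc) _.
  apply: limr_le => //; near=> n => /=; exact: vb.
have esplit : forall n, series (fun n => rseq R a (e n)) n = series u (e n) - series v (e n).
  move=> n; apply/eqP; rewrite eq_sym subr_eq; apply/eqP.
  rewrite !seriesEnat /= [X in _ = X + _]big_mkord.
  rewrite (sum_enum _ he.1 he.2) [LHS](bigID (fun i => `[< X i >])) /=; congr (_ + _).
  rewrite big_mkcond /=; apply: eq_bigr => i _; rewrite /v.
  by case: (asboolP (X i)).
have ecvg : e @ \oo --> \oo.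
  apply/cvgnyPge => A0; near=> n; apply: leq_trans (smono_ge he.1 n).
  near: n; exact: nbhs_infty_ge.
exists (limn (series u) - limn (series v)); split.
  exists e; split => //.
  rewrite (funext esplit); apply: cvgB.
    exact: cvg_comp _ _ ecvg hc.
  exact: cvg_comp _ _ ecvg hvc.
rewrite addrC addKr normrN; apply: le_lt_trans tb _.
by rewrite ltr_pdivrMr // ltr_pMr // ltr1n.
Unshelve. all: by end_near. Qed.

End Part1.

Theorem mainTheorem13 (R : realType) (eps : R) (heps : 0 < eps) :
  (forall A : set (nat -> rat), A `<=` Scc R -> finite_set A ->
     exists X : set nat, inf_coinf X /\ good_for eps A X)
  /\
  (exists A : set (nat -> rat), A `<=` Scc R /\ (A #= [set: nat])%card /\
     ~ (exists X : set nat, inf_coinf X /\ good_for eps A X)).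
Proof.
split.
  by move=> A AS Af; exact: part1.
exact: part2.
Qed.
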